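(* Fix $k\ge2$, $c>0$ and $\zeta_n\in(0,1]$ with $\limsup_{n\to\infty}\zeta_n(k-1)c^{k-1}<e$. For any sequence $G_n=(V_n,E_n)$ of asymptotically tree-like $k$-uniform hypergraphs, for all sufficiently large $n$ there is a unique $\mathbf x^\ast\in[0,c]^{V_n}$ with $F^{G_n}_{c,\zeta_n}(\mathbf x^\ast)=\mathbf x^\ast$.
   Context: Hypergraphs are simple. For a hypergraph $G$ and $S\subseteq V(G)$, $d_G(S)=|\{e\in E(G):S\subseteq e\}|$, $\Delta_\ell(G)=\max_{|S|=\ell}d_G(S)$, $\Delta(G)=\Delta_1(G)$ the maximum degree, and $\Gamma(G)$ is the maximum over distinct $v,v'$ of the number of $(k-1)$-sets $S$ with $S\cup\{v\},S\cup\{v'\}\in E(G)$. A sequence $(G_n)$ of $k$-uniform hypergraphs is asymptotically tree-like if, with $G=G_n$, $\Delta=\Delta(G)$, as $n\to\infty$: (1) $\Delta\to\infty$; (2) $\Delta_\ell(G)=o(\Delta^{\frac{k-\ell}{k-1}})$ for each $\ell\in\{2,\dots,k-1\}$; (3) $\Gamma(G)=o(\Delta)$; (4) $|E(G)|/|V(G)|=\Omega(\Delta)$. For a $k$-uniform hypergraph $G=(V,E)$ with maximum degree $\Delta$, the map $F^G_{c,\zeta}:[0,c]^V\to[0,c]^V$ is $(F^G_{c,\zeta}(\mathbf x))_v=c\exp\left(-\frac{\zeta}{\Delta}\sum_{e\ni v}\prod_{u\in e\setminus\{v\}}x_u\right)$. *)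

(* Defs.v *)
From HB Require Import structures.
From mathcomp Require Import all_boot all_order all_algebra.
From mathcomp Require Import all_classical all_reals all_analysis.
Set Implicit Arguments. Unset Strict Implicit. Unset Printing Implicit Defensive.
Import Order.TTheory GRing.Theory Num.Theory.
Local Open Scope ring_scope.

(* A (simple) hypergraph on the finite vertex type V is given by its edge set
   E : {set {set V}} (a set of sets, hence no repeated edges). *)
Section Hyper.
Variable V : finType.
Variable E : {set {set V}}.

Definition kuniform (k : nat) : bool := [forall e in E, #|e| == k].

Definition hdeg (S : {set V}) : nat := #|[set e in E | S \subset e]|.

Definition hDelta_l (l : nat) : nat := \max_(S : {set V} | #|S| == l) hdeg S.

Definition hDelta : nat := hDelta_l 1.

Definition hGamma (k : nat) : nat :=
  \max_(p : V * V | p.1 != p.2)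
     #|[set S : {set V} | (#|S| == k.-1) && (S :|: [set p.1] \in E)
                          && (S :|: [set p.2] \in E)]|.

Definition Fmap (R : realType) (c zeta : R) (x : V -> R) (v : V) : R :=
  c * expR (- (zeta / (hDelta%:R)) *
            \sum_(e in E | v \in e) \prod_(u in e :\ v) x u).

End Hyper.

Definition littleo_seq (R : realType) (u w : nat -> R) : Prop :=
  forall eps : R, 0 < eps -> exists N, forall n, (N <= n)%N -> `|u n| <= eps * `|w n|.

Definition bigOmega_seq (R : realType) (u w : nat -> R) : Prop :=
  exists2 C : R, 0 < C & exists N, forall n, (N <= n)%N -> C * `|w n| <= `|u n|.

Definition asymp_tree_like (R : realType) (k : nat) (V : nat -> finType)
  (E : forall n, {set {set V n}}) : Prop :=
  [/\ (forall n, kuniform (E n) k),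
      (forall M : nat, exists N, forall n, (N <= n)%N -> (M <= hDelta (E n))%N),
      (forall l : nat, (2 <= l <= k.-1)%N ->
         littleo_seq (fun n => (hDelta_l (E n) l)%:R : R)
                     (fun n => ((hDelta (E n))%:R : R) `^ ((k - l)%:R / (k.-1)%:R))),
      littleo_seq (fun n => (hGamma (E n) k)%:R : R) (fun n => (hDelta (E n))%:R)
    &
      bigOmega_seq (fun n => (#|E n|%:R / #|V n|%:R : R)) (fun n => (hDelta (E n))%:R)].

(* Main.v *)
Require Import Defs.
From HB Require Import structures.
From mathcomp Require Import all_boot all_order all_algebra.
From mathcomp Require Import all_classical all_reals all_analysis.
From mathcomp Require Import ring lra.
Import Order.TTheory GRing.Theory Num.Theory.
Local Open Scope ring_scope.

Section K.
Variable R : realType.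
Lemma fderiv (S w x : R) : is_derive x 1 (fun x => x * w - expR ((1 - expR (- x)) * S))
   (w - expR ((1 - expR (- x)) * S) * (expR (- x) * S)).
Proof.
apply: trigger_derive.
rewrite /GRing.scale /=. ring.
Qed.

Lemma key_ineq (S m : R) : 0 <= S -> 0 <= m ->
  expR ((1 - expR (- m)) * S) <= 1 + m * expR (S - 1).
Proof.
move=> S0 m0.
set f := (fun x => x * expR (S - 1) - expR ((1 - expR (- x)) * S)).
have D (x : R) : is_derive x (1:R) f (expR (S - 1) - expR ((1 - expR (- x)) * S) * (expR (- x) * S)).
  exact: fderiv.
have : f 0 <= f m.
  apply: (@ger0_derive1_ndecr _ f 0 m) => //.
  - move=> x _; rewrite derive1E (@derive_val _ _ _ _ _ _ _ (D x)) subr_ge0.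
    set y := expR (- x) * S.
    have y0 : 0 <= y by rewrite mulr_ge0 // expR_ge0.
    have -> : (1 - expR (- x)) * S = S - y by rewrite /y; ring.
    rewrite expRD -mulrA.

    rewrite expRD ler_pM2l ?expR_gt0 //.
    rewrite expRN mulrC ler_pdivrMr ?expR_gt0 //.
    have := expR_ge1Dx (y - 1).
    rewrite -expRD.
    have -> : 1 + (y - 1) = y by ring.
    by rewrite addrC.
  - apply: derivable_within_continuous => x _; exact: (@ex_derive _ _ _ _ _ _ _ (D x)).
rewrite /f mul0r oppr0 expR0 subrr mul0r expR0 sub0r.
lra.
Qed.
End K.

Section L.
Local Open Scope classical_set_scope.
Variable R : realType.
Lemma limsup_ev (u : nat -> R) (B a : R) : (forall n, `|u n| <= B) ->
  limn_sup u < a -> exists N, forall n, (N <= n)%N -> u n < a.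
Proof.
move=> uB.
have bu : bounded_fun u.
  rewrite /bounded_near; near=> M => x _ /=.
  apply: (le_trans (uB x)); near: M; apply: nbhs_pinfty_ge; exact: num_real.
rewrite limn_supE //.
move=> /inf_lt [].
  by exists (sups u 0%N); exists 0%N.
move=> y [N _ <-] hN; exists N => n Nn.
apply: le_lt_trans hN.
apply: ub_le_sup; last by exists n.
apply: has_ubound_sdrop; exact: bounded_fun_has_ubound.
Unshelve. all: end_near.
Qed.

Lemma geo_small (r eps : R) : 0 <= r < 1 -> 0 < eps -> exists j, r ^+ j < eps.
Proof.
move=> /andP[r0 r1] e0.
have r1' : `|r| < 1 by rewrite ger0_norm.
have := cvg_expr r1'.
move=> /cvgr0_norm_lt /(_ _ e0) [N _ HN].
exists N; have := HN N (leqnn N); rewrite ger0_norm // exprn_ge0 //.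
Qed.
End L.

Section H.
Local Open Scope classical_set_scope.
Variable R : realType.
Variables (V : finType) (E : {set {set V}}) (k : nat) (c zeta : R).
Hypothesis kuni : kuniform E k.
Hypothesis c0 : 0 < c.
Hypothesis z0 : 0 < zeta.
Hypothesis D0 : (0 < hDelta E)%N.

Definition Dl : R := (hDelta E)%:R.
Definition T (x : V -> R) v :=
  zeta / Dl * \sum_(e in E | v \in e) \prod_(u in e :\ v) x u.
Local Notation F := (Fmap E c zeta).

Lemma Dl_gt0 : 0 < Dl.
Proof. by rewrite /Dl ltr0n. Qed.

Lemma FmapE x v : F x v = c * expR (- T x v).
Proof. by rewrite /Fmap /T mulNr. Qed.

Lemma deg_le v : (#|[set e in E | v \in e]| <= hDelta E)%N.
Proof.
rewrite /hDelta /hDelta_l.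
have -> : #|[set e in E | v \in e]| = hdeg E (finset.set1 v).
  by rewrite /hdeg; apply: eq_card => e; rewrite !inE finset.sub1set.
by apply: (leq_bigmax_cond (finset.set1 v)); rewrite cards1.
Qed.

Lemma sum_le v (f : {set V} -> R) C :
  (forall e, e \in E -> v \in e -> f e <= C) -> 0 <= C ->
  \sum_(e in E | v \in e) f e <= Dl * C.
Proof.
move=> hf C0.
apply: (@le_trans _ _ (\sum_(e in E | v \in e) C)).
  by apply: ler_sum => e /andP[eE ve]; exact: hf.
rewrite (eq_bigl (fun e => e \in [set e in E | v \in e])); last first.
  by move=> e; rewrite inE.
rewrite sumr_const -mulr_natl; apply: ler_wpM2r => //.
rewrite /Dl ler_nat; exact: deg_le.
Qed.

Lemma card_edge e v : e \in E -> v \in e -> #|e :\ v| = k.-1.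
Proof.
move=> eE ve.
move/forall_inP: kuni => /(_ e eE) /eqP Hk.
by move: (cardsD1 v e); rewrite ve Hk => ->.
Qed.

Lemma prod_ge0 (x : V -> R) e v : (forall u, 0 <= x u) -> 0 <= \prod_(u in e :\ v) x u.
Proof. by move=> h; apply: prodr_ge0 => u _. Qed.

Lemma prod_le (x : V -> R) e v : e \in E -> v \in e -> (forall u, 0 <= x u <= c) ->
  \prod_(u in e :\ v) x u <= c ^+ k.-1.
Proof.
move=> eE ve h.
apply: (@le_trans _ _ (\prod_(u in e :\ v) c)).
  by apply: ler_prod => u _; exact: h.
by rewrite prodr_const card_edge.
Qed.

Lemma T_ge0 x v : (forall u, 0 <= x u) -> 0 <= T x v.
Proof.
move=> h; rewrite /T mulr_ge0 //.
  by rewrite divr_ge0 // ?ltW // /Dl ler0n.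
by apply: sumr_ge0 => e _; exact: prod_ge0.
Qed.

Lemma T_le x v : (forall u, 0 <= x u <= c) -> T x v <= zeta * c ^+ k.-1.
Proof.
move=> h; rewrite /T.
apply: (@le_trans _ _ (zeta / Dl * (Dl * c ^+ k.-1))).
  apply: ler_wpM2l; first by rewrite divr_ge0 // ?ltW // /Dl ler0n.
  apply: sum_le; last by rewrite exprn_ge0 // ltW.
  by move=> e eE ve; exact: prod_le.
by rewrite mulrA divfK // gt_eqF // Dl_gt0.
Qed.

Lemma T_mono a b v : (forall u, 0 <= a u) -> (forall u, a u <= b u) -> T a v <= T b v.
Proof.
move=> ha hab; rewrite /T; apply: ler_wpM2l; first by rewrite divr_ge0 // ?ltW // /Dl ler0n.
apply: ler_sum => e _; apply: ler_prod => u _.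
by rewrite ha hab.
Qed.

Lemma F_bounds x v : (forall u, 0 <= x u) -> 0 < F x v <= c.
Proof.
move=> h; rewrite FmapE mulr_gt0 ?expR_gt0 //=.
rewrite ger_pMr // expR_le1 oppr_le0; exact: T_ge0.
Qed.

Lemma F_anti a b v : (forall u, 0 <= a u) -> (forall u, a u <= b u) -> F b v <= F a v.
Proof.
move=> ha hab; rewrite !FmapE ler_pM2l // ler_expR lerN2; exact: T_mono.
Qed.

Lemma theta_lemma a b (M : R) v : 0 <= M -> (forall w, 0 <= a w) ->
  (forall w, expR (- M) * a w <= b w) ->
  T a v - T b v <= (1 - expR (- ((k.-1)%:R * M))) * T a v.
Proof.
move=> M0 ha hb.
rewrite /T -mulrBr -sumrB [in X in _ <= X]mulrCA [in X in _ <= X]mulr_sumr.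
apply: ler_wpM2l; first by rewrite divr_ge0 // ?ltW // /Dl ler0n.
apply: ler_sum => e /andP[eE ve].
have H : expR (- ((k.-1)%:R * M)) * \prod_(u in e :\ v) a u <= \prod_(u in e :\ v) b u.
  apply: (@le_trans _ _ (\prod_(u in e :\ v) (expR (- M) * a u))).
    by rewrite big_split /= prodr_const card_edge // -mulrN expRM_natl.
  by apply: ler_prod => u _; rewrite hb mulr_ge0 ?expR_ge0.
move: H; set X := expR _; set P := \prod_(u in _) a u; set Q := \prod_(u in _) b u.
move=> H; rewrite mulrBl mul1r; lra.
Qed.

Lemma edge_bound (S Sb m : R) : 0 <= S -> 0 <= m ->
  S - Sb <= (1 - expR (- m)) * S -> expR (- Sb) - expR (- S) <= m * expR (-1).
Proof.
move=> S0 m0 H.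
have -> : expR (- Sb) = expR (- S) * expR (S - Sb) by rewrite -expRD; congr expR; ring.
have H1 : expR (S - Sb) <= 1 + m * expR (S - 1).
  apply: (le_trans _ (@key_ineq _ S m S0 m0)); by rewrite ler_expR.
have H2 : expR (- S) * expR (S - Sb) <= expR (- S) * (1 + m * expR (S - 1)).
  by rewrite ler_pM2l ?expR_gt0.
have H3 : expR (- S) * (1 + m * expR (S - 1)) = expR (- S) + m * expR (-1).
  by rewrite mulrDr mulr1 mulrCA -expRD; congr (_ + _ * expR _); ring.
lra.
Qed.

Lemma two_step a b (m : R) v : (forall w, 0 <= a w <= c) -> (forall w, 0 <= b w <= c) ->
  0 <= m -> (forall w, T a w - T b w <= (1 - expR (- m)) * T a w) ->
  T (F b) v - T (F a) v <= zeta * (c ^+ k.-1 * (m * expR (-1))).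
Proof.
move=> ha hb m0 H.
have ha0 w : 0 <= a w by case/andP: (ha w).
have hb0 w : 0 <= b w by case/andP: (hb w).
have C0 : 0 <= c ^+ k.-1 * (m * expR (-1)).
  by apply: mulr_ge0; [exact: exprn_ge0 (ltW c0)|exact: mulr_ge0 m0 (expR_ge0 _)].
rewrite /T -mulrBr -sumrB.
apply: (@le_trans _ _ (zeta / Dl * (Dl * (c ^+ k.-1 * (m * expR (-1)))))); last first.
  by rewrite mulrA divfK // gt_eqF // Dl_gt0.
apply: ler_wpM2l; first by rewrite divr_ge0 // ?ltW // /Dl ler0n.
apply: sum_le => // e eE ve.
have PE (x : V -> R) : \prod_(u in e :\ v) F x u =
    c ^+ k.-1 * expR (- \sum_(u in e :\ v) T x u).
  rewrite (eq_bigr (fun u => c * expR (- T x u))); last by move=> u _; rewrite FmapE.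
  by rewrite big_split /= prodr_const card_edge // -sumrN expR_sum.
rewrite !PE -mulrBr; apply: ler_wpM2l; first by rewrite exprn_ge0 // ltW.
apply: edge_bound => //.
  by apply: sumr_ge0 => u _; exact: T_ge0.
rewrite -sumrB mulr_sumr; apply: ler_sum => u _; exact: H.
Qed.

Fixpoint it (i : nat) : (V -> R) * (V -> R) :=
  if i is j.+1 then (F (it j).2, F (it j).1) else (fun=> 0, fun=> c).

Lemma it_bounds i v : 0 <= (it i).1 v <= c /\ 0 <= (it i).2 v <= c.
Proof.
elim: i v => [|i IH] v /=; first by split; rewrite ?lexx ?(ltW c0).
have h1 u : 0 <= (it i).1 u by case: (IH u) => /andP[].
have h2 u : 0 <= (it i).2 u by case: (IH u) => _ /andP[].
have := @F_bounds _ v h1; have := @F_bounds _ v h2.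
by move=> /andP[/ltW -> ->] /andP[/ltW -> ->].
Qed.

Lemma it1_ge0 i u : 0 <= (it i).1 u.
Proof. by case: (it_bounds i u) => /andP[]. Qed.
Lemma it2_ge0 i u : 0 <= (it i).2 u.
Proof. by case: (it_bounds i u) => _ /andP[]. Qed.

Lemma it_order i : (forall v, (it i).1 v <= (it i.+1).1 v) /\
                   (forall v, (it i.+1).2 v <= (it i).2 v).
Proof.
elim: i => [|i [IH1 IH2]]; split => v /=.
- by case/andP: (@F_bounds _ v (fun u => ltW c0)) => /ltW.
- by case/andP: (@F_bounds _ v (fun u => lexx (0:R))).
- by apply: F_anti => [u|u]; [exact: (it2_ge0 i.+1 u)|exact: IH2].
- by apply: F_anti => [u|u]; [exact: (it1_ge0 i u)|exact: IH1].
Qed.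

Lemma it_le i v : (it i).1 v <= (it i).2 v.
Proof.
elim: i v => [|i IH] v /=; first exact: ltW.
by apply: F_anti => [u|u]; [exact: (it1_ge0 i u)|exact: IH].
Qed.

Lemma it_mono i d v : (it i).1 v <= (it (i + d)).1 v /\ (it (i + d)).2 v <= (it i).2 v.
Proof.
elim: d => [|d [IH1 IH2]]; first by rewrite addn0 !lexx.
rewrite addnS; case: (it_order (i + d)) => h1 h2; split.
  exact: le_trans IH1 (h1 v).
exact: le_trans (h2 v) IH2.
Qed.

Lemma it_lu i j v : (it i).1 v <= (it j).2 v.
Proof.
case: (it_mono i j v) => h1 _; case: (it_mono j i v) => _ h2.
rewrite addnC in h2.
exact: le_trans h1 (le_trans (it_le _ v) h2).
Qed.

Lemma sandwichF x i : (forall u, 0 <= x u) -> (forall v, (it i).1 v <= x v <= (it i).2 v) ->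
  forall v, (it i.+1).1 v <= F x v <= (it i.+1).2 v.
Proof.
move=> x0 H v /=.
apply/andP; split.
- by apply: F_anti => [u|u]; [exact: x0|case/andP: (H u)].
- by apply: F_anti => [u|u]; [exact: it1_ge0|case/andP: (H u)].
Qed.

Lemma sandwich x : (forall v, 0 <= x v <= c) -> F x = x ->
  forall i v, (it i).1 v <= x v <= (it i).2 v.
Proof.
move=> hx Fx; elim => [|i IH] v; first exact: (hx v).
have -> : x v = F x v by rewrite Fx.
apply: sandwichF IH v => u; by case/andP: (hx u).
Qed.

Definition Dd i v := T (it i).2 v - T (it i).1 v.

Lemma gap i v : (it i.+1).2 v - (it i.+1).1 v <= c * Dd i v.
Proof.
rewrite /= !FmapE /Dd -mulrBr ler_pM2l //.
have Tle : T (it i).1 v <= T (it i).2 v by apply: T_mono => u; [exact: it1_ge0|exact: it_le].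
set a := T (it i).1 v in Tle *; set b := T (it i).2 v in Tle *.
have a0 : 0 <= a by apply: T_ge0 => u; exact: it1_ge0.
have -> : expR (- b) = expR (- a) * expR (- (b - a)) by rewrite -expRD; congr expR; ring.
have e1 : expR (- a) <= 1 by rewrite expR_le1 oppr_le0.
have e0 : 0 <= expR (- a) by exact: expR_ge0.
have f1 : expR (- (b - a)) <= 1 by rewrite expR_le1 oppr_le0 subr_ge0.
have f2 := expR_ge1Dx (- (b - a)).
set p := expR (- a) in e1 e0 *; set q := expR (- (b - a)) in f1 f2 *.
nra.
Qed.

Lemma Dd_le0 i v : Dd i v <= zeta * c ^+ k.-1.
Proof.
rewrite /Dd; have := @T_le _ v (fun u => (proj2 (it_bounds i u))).
have := @T_ge0 (it i).1 v (it1_ge0 i); lra.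
Qed.

Lemma Dd_step i (M : R) : 0 <= M -> (forall w, Dd i w <= M) ->
  forall v, Dd i.+2 v <= zeta * (c ^+ k.-1 * ((k.-1)%:R * M * expR (-1))).
Proof.
move=> M0 HM v.
rewrite /Dd.
apply: (@two_step (it i.+1).2 (it i.+1).1).
- by move=> w; case: (it_bounds i.+1 w).
- by move=> w; case: (it_bounds i.+1 w).
- by rewrite mulr_ge0.
move=> w; apply: theta_lemma => // [u|u]; first exact: it2_ge0.
rewrite /= !FmapE mulrCA ler_pM2l // -expRD ler_expR.
have := HM u; rewrite /Dd; lra.
Qed.

Definition rho := zeta * (c ^+ k.-1 * ((k.-1)%:R * expR (-1))).
Definition M0 := zeta * c ^+ k.-1.

Lemma rho_ge0 : 0 <= rho.
Proof.
apply: mulr_ge0; first exact: ltW.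
apply: mulr_ge0; first exact: exprn_ge0 (ltW c0).
by apply: mulr_ge0; [exact: ler0n|exact: expR_ge0].
Qed.
Lemma M0_gt0 : 0 < M0.
Proof. by rewrite /M0 mulr_gt0 // exprn_gt0. Qed.

Lemma Dd_geo j v : Dd j.*2 v <= rho ^+ j * M0.
Proof.
elim: j v => [|j IH] v; first by rewrite expr0 mul1r; exact: Dd_le0.
rewrite doubleS.
have Hn : 0 <= rho ^+ j * M0.
  by apply: mulr_ge0; [exact: exprn_ge0 rho_ge0|exact: ltW M0_gt0].
apply: le_trans (@Dd_step j.*2 _ Hn IH v) _.
by rewrite exprS le_eqVlt; apply/orP; left; apply/eqP; rewrite /rho; ring.
Qed.

Lemma gap_geo j v : (it j.*2.+1).2 v - (it j.*2.+1).1 v <= c * (rho ^+ j * M0).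
Proof.
apply: le_trans (gap _ v) _; rewrite ler_pM2l //; exact: Dd_geo.
Qed.

Lemma dist_le {l u a b : R} : l <= a <= u -> l <= b <= u -> `|a - b| <= u - l.
Proof. move=> /andP[h1 h2] /andP[h3 h4]; rewrite ler_norml; apply/andP; split; lra. Qed.

Theorem fp_unique : zeta * (k.-1)%:R * c ^+ k.-1 < expR 1 ->
  exists! x : V -> R, (forall v, 0 <= x v <= c) /\ F x = x.
Proof.
move=> Zlt.
have rho1 : rho < 1.
  have -> : rho = zeta * (k.-1)%:R * c ^+ k.-1 / expR 1.
    by rewrite /rho expRN; ring.
  by rewrite ltr_pdivrMr ?expR_gt0 // mul1r.
have small eps : 0 < eps -> exists j, c * (rho ^+ j * M0) < eps.
  move=> e0.
  have cM : 0 < c * M0 by rewrite mulr_gt0 // M0_gt0.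
  have rr : 0 <= rho < 1 by rewrite rho_ge0 rho1.
  have [j hj] := @geo_small _ rho _ rr (divr_gt0 e0 cM).
  exists j; move: hj; rewrite ltr_pdivlMr // => hj.
  by apply: le_lt_trans hj; rewrite mulrCA.
have close (a b : R) : (forall j, `|a - b| <= c * (rho ^+ j * M0)) -> a = b.
  move=> H; apply/eqP; rewrite -subr_eq0 -normr_eq0; apply/negPn/negP => hne.
  have pos : 0 < `|a - b| by rewrite lt0r hne normr_ge0.
  have [j hj] := small _ pos.
  by have := le_lt_trans (H j) hj; rewrite ltxx.
pose xs v := sup (range (fun i => (it i).1 v)).
have ne v : range (fun i => (it i).1 v) !=set0 by exists ((it 0).1 v); exists 0%N.
have ub v j : ubound (range (fun i => (it i).1 v)) ((it j).2 v).
  by move=> y [i _ <-]; exact: it_lu.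
have xl v i : (it i).1 v <= xs v.
  by apply: ub_le_sup; [exists ((it 0).2 v); exact: ub | exists i].
have xu v j : xs v <= (it j).2 v by apply: ge_sup; [exact: ne|exact: ub].
have xsand i v : (it i).1 v <= xs v <= (it i).2 v by rewrite xl xu.
have x0 v : 0 <= xs v by exact: (xl v 0%N).
exists xs; split.
  split; first by move=> v; rewrite x0; exact: (xu v 0%N).
  apply: funext => v; apply: close => j.
  apply: le_trans (gap_geo j v).
  exact: (dist_le (@sandwichF xs j.*2 x0 (xsand j.*2) v) (xsand j.*2.+1 v)).
move=> y [hy Fy]; apply: funext => v; apply: close => j.
apply: le_trans (gap_geo j v).
exact: (dist_le (xsand j.*2.+1 v) (@sandwich y hy Fy j.*2.+1 v)).
Qed.

End H.

Theorem mainTheorem8 (R : realType) (k : nat) (c : R) (zeta : nat -> R)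
  (V : nat -> finType) (E : forall n, {set {set V n}}) :
  (2 <= k)%N -> 0 < c ->
  (forall n, 0 < zeta n <= 1) ->
  limn_sup (fun n => zeta n * (k.-1)%:R * c ^+ k.-1) < expR 1 ->
  @asymp_tree_like R k V E ->
  exists N, forall n, (N <= n)%N ->
    exists! x : V n -> R,
      (forall v, 0 <= x v <= c) /\ Fmap (E n) c (zeta n) x = x.
Proof.
move=> k2 c0 hz hls [kun hD _ _ _].
have [N1 HN1] := hD 1%N.
have ub n : `|zeta n * (k.-1)%:R * c ^+ k.-1| <= (k.-1)%:R * c ^+ k.-1.
  have /andP[z0 z1] := hz n.
  have K0 : 0 <= (k.-1)%:R * c ^+ k.-1 :> R by rewrite mulr_ge0 // exprn_ge0 // ltW.
  rewrite -mulrA ger0_norm; last by rewrite mulr_ge0 // ltW.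
  by rewrite ler_piMl.
have [N2 HN2] := @limsup_ev _ _ _ _ ub hls.
exists (maxn N1 N2) => n Nn.
have /andP[z0 z1] := hz n.
apply: (@fp_unique R (V n) (E n) k c (zeta n)) => //.
  exact: (HN1 n (leq_trans (leq_maxl N1 N2) Nn)).
exact: (HN2 n (leq_trans (leq_maxr N1 N2) Nn)).
Qed.
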